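(* Let $G$ be a simple loopless graph on $[L]$, $p\ge1$, and let $\Phi_p:\Pi_{2p}(G)\to[\mathcal{T}(G)]^{2p}$ be the map defined recursively below. For $(\pi,\phi)\in\Pi_{2p}(G)$ and $w=\Phi_p(\pi,\phi)=(w_1,\dots,w_{2p})$ (with $w_0:=e$), for every block $\{s,r\}\in\pi$ with $s<r$ we have \[ |w_s|=|w_{s-1}|+1\quad\text{and}\quad |w_r|=|w_{r-1}|-1. \]
   Context: $\mathcal{T}(G)=\langle v\in[L]: uv=vu \text{ for } (u,v)\in E(G)\rangle$ is the trace monoid of $G$ (words in letters $[L]$ modulo commutation of adjacent letters), $e$ the empty word, $|w|$ the length of a word. $P_2(2p)$ is the set of pair partitions of $[2p]$; blocks $\{u_1,v_1\},\{u_2,v_2\}$ cross if $u_1<u_2<v_1<v_2$; $F_\pi$ is the graph on the blocks of $\pi$ with edges between crossing blocks. $\Pi_{2p}(G)=\{(\pi,\phi):\pi\in P_2(2p),\ \phi\in\operatorname{Hom}(F_\pi,G)\}$, where $\phi$ maps blocks to $[L]$ and crossing blocks to adjacent vertices. Definition of $\Phi_p$: (1) For $p=1$, $P_2(2)=\{\{\{1,2\}\}\}$; if $\phi$ assigns label $i$ to the block, $\Phi_1(\pi,\phi)=(i,e)$. (2) Given $\Phi_p$ and $(\pi,\phi)\in\Pi_{2(p+1)}(G)$, let $r$ be the smallest index in $[2(p+1)]$ that is the larger element of its block, let $U=\{s,r\}\in\pi$ with $s<r$, $i_s=\phi(U)$, $\sigma=\pi\setminus\{U\}$, $\psi=\phi|_\sigma$.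 Identify $P_2([2(p+1)]\setminus\{s,r\})$ with $P_2(2p)$ via the order-preserving bijection $[2(p+1)]\setminus\{s,r\}\to[2p]$, and write $u=\Phi_p(\sigma,\psi)=(u_k)_{k\in[2(p+1)]\setminus\{s,r\}}$; for an index $k$ let $u_{k^-}$ denote $u_j$ for the largest $j<k$ with $j\notin\{s,r\}$, and $u_{k^-}=e$ if no such $j\ge1$ exists. Then $\Phi_{p+1}(\pi,\phi)_k=u_k$ for $k<s$; $=i_s u_{s^-}$ for $k=s$; $=i_su_k$ for $s<k<r$; $=u_{r^-}$ for $k=r$; $=u_k$ for $k>r$ (products taken in $\mathcal{T}(G)$). *)

(* Defs.v *)
From mathcomp Require Import all_boot.
Set Implicit Arguments. Unset Strict Implicit. Unset Printing Implicit Defensive.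

(* A graph G on [L] is a relation on 'I_L (simple loopless: symmetric,
   irreflexive; these are hypotheses of the theorem).
   Elements of the trace monoid T(G) are represented by words
   (seq 'I_L); the product in T(G) is concatenation of representatives and
   the length |w| of a trace is the size of any representative.  Phi below
   produces, for each position, a representative word of the trace
   Phi_p(pi,phi)_k. *)

Definition word (L : nat) := seq 'I_L.

Inductive trace_eq (L : nat) (G : rel 'I_L) : word L -> word L -> Prop :=
  | te_refl w : trace_eq G w w
  | te_swap u v a b : G a b -> trace_eq G (u ++ a :: b :: v) (u ++ b :: a :: v)
  | te_sym w1 w2 : trace_eq G w1 w2 -> trace_eq G w2 w1
  | te_trans w1 w2 w3 : trace_eq G w1 w2 -> trace_eq G w2 w3 -> trace_eq G w1 w3.

(* A labelled pair partition (pi, phi) is a list of blocks (s, r, phi{s,r})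
   with s < r. *)
Definition lblock (L : nat) := (nat * nat * 'I_L)%type.

Definition in_Pi (L : nat) (G : rel 'I_L) (p : nat) (pi : seq (lblock L)) : Prop :=
  [/\ all (fun t : lblock L => t.1.1 < t.1.2) pi,
      perm_eq (flatten [seq [:: t.1.1; t.1.2] | t <- pi]) (iota 1 (2 * p)) &
      (* phi is a graph homomorphism F_pi -> G: crossing blocks get adjacent labels *)
      forall t1 t2 : lblock L, t1 \in pi -> t2 \in pi ->
        t1.1.1 < t2.1.1 < t1.1.2 -> t1.1.2 < t2.1.2 -> G t1.2 t2.2 ].

(* k-th entry (k >= 1) of a tuple stored as a list w = [w_1; ...; w_n],
   with w_0 := e. *)
Definition wk (L : nat) (w : seq (word L)) (k : nat) : word L :=
  if k is k'.+1 then nth [::] w k' else [::].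

(* Phi_p, defined literally by the recursion of the paper.  Output is the
   list [w_1; ...; w_{2p}]. *)
Fixpoint Phi (L : nat) (p : nat) (pi : seq (lblock L)) {struct p} : seq (word L) :=
  match p with
  | 0 => [::]
  | 1 => match pi with
         | (_, _, i) :: _ => [:: [:: i]; [::]]
         | [::] => [::]
         end
  | p'.+1 =>
    match pi with
    | [::] => [::]
    | b0 :: _ =>
      (* r = smallest index that is the larger element of its block *)
      let rmin := foldr minn (2 * p) [seq t.1.2 | t <- pi] in
      let U := nth b0 pi (find (fun t : lblock L => t.1.2 == rmin) pi) in
      let s := U.1.1 in let r := U.1.2 in let i := U.2 in
      let sigma := rem U pi in
      (* order-preserving bijection [2p] \ {s,r} -> [2(p-1)] *)
      let red k := k - (s < k) - (r < k) in
      let sigma' := [seq (red t.1.1, red t.1.2, t.2) | t <- sigma] in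
      let u' := Phi p' sigma' in
      let u k := wk u' (red k) in
      let uminus k :=
        let J := [seq j <- iota 1 k.-1 | (j != s) && (j != r)] in
        if J is [::] then [::] else u (last 0 J) in
      [seq (if k < s then u k
            else if k == s then i :: uminus s
            else if k < r then i :: u k
            else if k == r then uminus r
            else u k) | k <- iota 1 (2 * p)]
    end
  end.

(* Main.v *)
Require Import Defs.
From mathcomp Require Import all_boot zify.
Set Implicit Arguments. Unset Strict Implicit. Unset Printing Implicit Defensive.

Section S.
Variable L : nat.
Implicit Types pi : seq (lblock L).

Definition red (U : lblock L) k := k - (U.1.1 < k) - (U.1.2 < k).
Definition sig' (U : lblock L) pi := [seq (red U t.1.1, red U t.1.2, t.2) | t <- rem U pi].
Definition uu (U : lblock L) (u' : seq (word L)) k := wk u' (red U k).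
Definition um (U : lblock L) (u' : seq (word L)) k :=
  let J := [seq j <- iota 1 k.-1 | (j != U.1.1) && (j != U.1.2)] in
  if J is [::] then [::] else uu U u' (last 0 J).
Definition stepU (p : nat) (U : lblock L) (u' : seq (word L)) :=
  [seq (if k < U.1.1 then uu U u' k
        else if k == U.1.1 then U.2 :: um U u' U.1.1
        else if k < U.1.2 then U.2 :: uu U u' k
        else if k == U.1.2 then um U u' U.1.2
        else uu U u' k) | k <- iota 1 (2 * p)].

Definition Umin p' (b0 : lblock L) pi0 :=
  nth b0 (b0 :: pi0) (find (fun t : lblock L => t.1.2 == foldr minn (2 * p'.+2) [seq t.1.2 | t <- b0 :: pi0]) (b0 :: pi0)).

Lemma Phi_step p' (b0 : lblock L) pi0 :
  Phi p'.+2 (b0 :: pi0) =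
  stepU p'.+2 (Umin p' b0 pi0) (Phi p'.+1 (sig' (Umin p' b0 pi0) (b0 :: pi0))).
Proof. Timeout 60 reflexivity. Qed.
Definition E pi := flatten [seq [:: t.1.1; t.1.2] | t <- pi].
Definition wf p pi := all (fun t : lblock L => (1 <= t.1.1) && (t.1.1 < t.1.2) && (t.1.2 <= 2 * p)) pi && uniq (E pi).
Definition O pi k := count (fun t : lblock L => t.1.1 <= k) pi.
Definition C pi k := count (fun t : lblock L => t.1.2 <= k) pi.

Lemma E_cons t pi : E (t :: pi) = t.1.1 :: t.1.2 :: E pi. Proof. by []. Qed.

Lemma memE t pi : t \in pi -> (t.1.1 \in E pi) && (t.1.2 \in E pi).
Proof.
elim: pi => //= t' pi IH; rewrite inE => /orP [/eqP -> | /IH /andP [h1 h2]].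
  by rewrite E_cons !inE !eqxx orbT.
by rewrite E_cons !inE h1 h2 !orbT.
Qed.

Lemma perm_E pi1 pi2 : perm_eq pi1 pi2 -> perm_eq (E pi1) (E pi2).
Proof. move=> h; apply: perm_flatten; exact: perm_map. Qed.

Lemma split_wf p pi U : wf p pi -> U \in pi ->
  [/\ perm_eq pi (U :: rem U pi),
      (1 <= U.1.1) && (U.1.1 < U.1.2) && (U.1.2 <= 2 * p),
      wf p (rem U pi) &
      forall t, t \in rem U pi -> [/\ t.1.1 != U.1.1, t.1.1 != U.1.2, t.1.2 != U.1.1 & t.1.2 != U.1.2]].
Proof.
move=> /andP [ha hu] hU.
have hp : perm_eq pi (U :: rem U pi) by apply: perm_to_rem.
have hu' : uniq (E (U :: rem U pi)) by rewrite -(perm_uniq (perm_E hp)).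
move: hu'; rewrite E_cons /= !inE negb_or => /andP [/andP [hsr hs] /andP [hr hu']].
split => //.
- exact: (allP ha).
- apply/andP; split => //; apply/allP => t ht; apply: (allP ha); exact: (mem_rem ht).
move=> t ht; have /andP [h1 h2] := memE ht.
by split; apply/eqP => e; [move: hs | move: hr | move: hs | move: hr]; rewrite -e ?h1 ?h2.
Qed.


Lemma red_le s r a k : 0 < s -> s < r -> a != s -> a != r ->
  (a - (s < a) - (r < a) <=
    (if k < s then k else if k == s then s.-1 else if k < r then k.-1
     else if k == r then r.-2 else k.-2)) = (a <= k).
Proof.
move=> hs0 hsr /eqP has /eqP har.
case: (ltnP s a) => h1; case: (ltnP r a) => h2;
case: (ltnP k s) => h3; case: (eqVneq k s) => h4; case: (ltnP k r) => h5;
case: (eqVneq k r) => h6; apply/idP/idP => /=; lia.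
Qed.

Definition g (P : pred nat) (f : nat -> word L) n :=
  let J := [seq j <- iota 1 n | P j] in if J is [::] then [::] else f (last 0 J).

Lemma g_succ P f n : g P f n.+1 = if P n.+1 then f n.+1 else g P f n.
Proof.
rewrite /g.
have -> : iota 1 n.+1 = iota 1 n ++ [:: n.+1] by rewrite -[in LHS](addn1 n) iotaD add1n.
rewrite filter_cat /=.
case: (P n.+1); last by rewrite cats0.
by case: [seq j <- iota 1 n | P j] => [|y J] //=; rewrite last_cat.
Qed.

Lemma g_low (P : pred nat) (f : nat -> word L) n : f 0 = [::] -> (forall j, 0 < j <= n -> P j) -> g P f n = f n.
Proof.
move=> h0; elim: n => [|n IH] hP; first by rewrite /g.
rewrite g_succ hP //; lia.
Qed.

Lemma count0 pi : wf 0 pi -> True. Proof. by []. Qed.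

Lemma O0 p pi : wf p pi -> O pi 0 = 0 /\ C pi 0 = 0.
Proof.
move=> /andP [ha _]; split; apply/eqP; rewrite -leqn0 leqNgt -has_count; apply/hasP => -[t /(allP ha) h] /=; lia.
Qed.

Lemma um_g U u' k : um U u' k = g (fun j => (j != U.1.1) && (j != U.1.2)) (uu U u') k.-1.
Proof. by []. Qed.

Lemma uu0 U u' : uu U u' 0 = [::].
Proof. by rewrite /uu /red !sub0n. Qed.

Lemma redv (s r : nat) (i : 'I_L) x y : let U := (s, r, i) in x != s -> x != r -> 0 < s -> s < r ->
  y = (if x < s then x else if x < r then x.-1 else x.-2) -> red U x = y.
Proof.
move=> U /eqP h1 /eqP h2 h3 h3' ->; rewrite /red /U /=.
case: (ltnP s x) => ?; case: (ltnP r x) => ?; case: (ltnP x s) => ?; case: (ltnP x r) => ?; lia.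
Qed.

Lemma um_s (s r : nat) (i : 'I_L) u' : let U := (s, r, i) in 0 < s -> s < r -> um U u' s = wk u' s.-1.
Proof.
move=> U h h'; rewrite um_g /= g_low ?uu0 //.
  rewrite /uu (@redv s r i s.-1 s.-1) //; try (apply/negP => /eqP ?; lia).
  case: (ltnP s.-1 s) => ? //; lia.
move=> j hj /=; apply/andP; split; apply/negP => /eqP ?; lia.
Qed.

Lemma um_r (s r : nat) (i : 'I_L) u' : let U := (s, r, i) in 0 < s -> s < r -> um U u' r = wk u' r.-2.
Proof.
move=> U h h'; rewrite um_g /=.
have -> : r.-1 = r.-2.+1 by lia.
rewrite g_succ; case: ifP => hP.
  move: hP => /andP [/eqP h1 /eqP h2].
  rewrite /uu (@redv s r i r.-2.+1 r.-2) //; try (apply/negP => /eqP ?; lia).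
  case: (ltnP r.-2.+1 s) => ?; first lia.
  case: (ltnP r.-2.+1 r) => ? //; lia.
move/negbT: hP; rewrite negb_and !negbK => /orP [/eqP e | /eqP e]; last lia.
rewrite g_low ?uu0 //.
  rewrite /uu (@redv s r i r.-2 r.-2) //; try (apply/negP => /eqP ?; lia).
  case: (ltnP r.-2 s) => ? //; lia.
move=> j hj /=; apply/andP; split; apply/negP => /eqP ?; lia.
Qed.

Lemma step_ok p' pi U u' : wf p'.+2 pi -> U \in pi ->
  (forall j, j <= 2 * p'.+1 -> size (wk u' j) + C (sig' U pi) j = O (sig' U pi) j) ->
  forall k, k <= 2 * p'.+2 -> size (wk (stepU p'.+2 U u') k) + C pi k = O pi k.
Proof.
case: U => [[s r] i] hw hU IH k hk.
have [hp hUb hw' hav] := split_wf hw hU.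
case: k hk => [|k] hk.
  by have [h1 h2] := O0 hw; rewrite h1 h2.
move: hUb => /= /andP [/andP [hs0 hsr] hr2].
rewrite /wk /stepU; cbn [fst snd]; rewrite (nth_map 0) ?size_iota; last lia.
rewrite nth_iota; last lia.
rewrite add1n.
have eO : O pi k.+1 = (s <= k.+1) + O (rem (s, r, i) pi) k.+1 by rewrite /O (permP hp).
have eC : C pi k.+1 = (r <= k.+1) + C (rem (s, r, i) pi) k.+1 by rewrite /C (permP hp).
pose j := (if k.+1 < s then k.+1 else if k.+1 == s then s.-1 else if k.+1 < r then k.+1.-1
     else if k.+1 == r then r.-2 else k.+1.-2).
have ej : j <= 2 * p'.+1.
  rewrite /j; case: (ltnP k.+1 s) => ?; first lia.
  case: (eqVneq k.+1 s) => ?; first lia.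
  case: (ltnP k.+1 r) => ?; first lia.
  case: (eqVneq k.+1 r) => ?; lia.
have hO : O (sig' (s, r, i) pi) j = O (rem (s, r, i) pi) k.+1.
  rewrite /O /sig' count_map; apply: eq_in_count => t ht /=.
  move: (hav t ht) => /= [? ? ? ?].
  by rewrite /red red_le //; lia.
have hC : C (sig' (s, r, i) pi) j = C (rem (s, r, i) pi) k.+1.
  rewrite /C /sig' count_map; apply: eq_in_count => t ht /=.
  move: (hav t ht) => /= [? ? ? ?].
  by rewrite /red red_le //; lia.
match goal with |- size ?F + _ = _ =>
  suff key : size F + (r <= k.+1) = (s <= k.+1) + size (wk u' j) end.
  by have H := IH j ej; rewrite eO eC -hO -hC addnA key -H addnA.
rewrite /j.
case: (ltnP k.+1 s) => h1.
  rewrite /uu (@redv s r i k.+1 k.+1); try (apply/negP => /eqP ?; lia); last by rewrite h1.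
  case: (leqP s k.+1) => ?; case: (leqP r k.+1) => ?; lia.
case: (eqVneq k.+1 s) => h2.
  rewrite um_s //= -h2.
  case: (leqP s k.+1) => ?; case: (leqP r k.+1) => ?; lia.
case: (ltnP k.+1 r) => h3.
  rewrite /= /uu (@redv s r i k.+1 k) //; try (apply/negP => /eqP ?; lia); last first.
    by rewrite ltnNge h1 /= h3.
  case: (leqP s k.+1) => ?; case: (leqP r k.+1) => ?; lia.
case: (eqVneq k.+1 r) => h4.
  rewrite um_r //.
  case: (leqP s k.+1) => ?; case: (leqP r k.+1) => ?; lia.
rewrite /= /uu (@redv s r i k.+1 k.-1) //; try (apply/negP => /eqP ?; lia); last first.
  by rewrite ltnNge h1 /= ltnNge h3.
case: (leqP s k.+1) => ?; case: (leqP r k.+1) => ?; lia.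
Qed.

Lemma Umin_in p' b0 pi0 : Umin p' b0 pi0 \in b0 :: pi0.
Proof.
rewrite /Umin; set n := find _ _.
case: (ltnP n (size (b0 :: pi0))) => h; first exact: mem_nth.
by rewrite nth_default // mem_head.
Qed.

Lemma E_map f pi : E [seq (f t.1.1, f t.1.2, t.2) | t <- pi] = map f (E pi).
Proof. by elim: pi => [|t pi IH] //; rewrite map_cons !E_cons IH. Qed.

Lemma wf_sig p' pi U : wf p'.+2 pi -> U \in pi -> wf p'.+1 (sig' U pi).
Proof.
case: U => [[s r] i] hw hU.
have [hp hUb hw' hav] := split_wf hw hU.
move: hUb => /= /andP [/andP [hs0 hsr] hr2].
have hu : uniq (E ((s, r, i) :: rem (s, r, i) pi)) by rewrite -(perm_uniq (perm_E hp)); case/andP: hw.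
move: hu; rewrite E_cons /= !inE negb_or => /andP [/andP [_ hs] /andP [hr hu']].
apply/andP; split.
  apply/allP => /= t /mapP [[[a b] j] ht' ->] /=.
  move: (hav _ ht') => /= [/eqP ? /eqP ? /eqP ? /eqP ?].
  move: hw' => /andP [/allP ha _]; move: (ha _ ht') => /= /andP [/andP [? ?] ?].
  rewrite /red /=.
  case: (ltnP s a) => ?; case: (ltnP r a) => ?;
  case: (ltnP s b) => ?; case: (ltnP r b) => ? /=; apply/andP; split; try (apply/andP; split); lia.
rewrite /sig' (E_map (red (s, r, i))) map_inj_in_uniq // => x y hx hy.
have ? : x <> s by move=> e; subst; rewrite hx in hs.
have ? : x <> r by move=> e; subst; rewrite hx in hr.
have ? : y <> s by move=> e; subst; rewrite hy in hs.
have ? : y <> r by move=> e; subst; rewrite hy in hr.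
rewrite /red /=.
case: (ltnP s x) => ?; case: (ltnP r x) => ?;
case: (ltnP s y) => ?; case: (ltnP r y) => ? /=; lia.
Qed.

Lemma inv p pi : 1 <= p -> wf p pi -> forall k, k <= 2 * p ->
  size (wk (Phi p pi) k) + C pi k = O pi k.
Proof.
elim: p pi => [//|p IH] pi _ hw k hk.
case: pi hw => [|b0 pi0] hw.
  by case: p IH hw hk => [|p'] IH hw hk; case: k hk => [|k] hk //=; rewrite nth_nil.
case: p IH hw hk => [|p'] IH hw hk; last first.
  rewrite Phi_step; apply: (step_ok hw (Umin_in p' b0 pi0)) => // j hj.
  by apply: IH => //; apply: wf_sig hw (Umin_in p' b0 pi0).
have [hp hb hw' hav] := split_wf hw (mem_head b0 pi0).
have e : rem b0 (b0 :: pi0) = pi0 by rewrite /= eqxx.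
rewrite e in hw' hav.
case: pi0 hw hp hw' hav e => [|t pi1] hw hp hw' hav e.
  case: b0 hb {hw hp hav e} => [[a b] i] /= /andP [/andP [h1 h2] h3].
  case: k hk => [|[|[|k]]] hk /=; lia.
exfalso.
case: b0 hb hav {hw hp e} => [[a b] i] hb hav.
case: t hav hw' => [[c d] j] hav hw'.
move: (hav _ (mem_head _ pi1)) => /= [/eqP h1 _ _ _].
move: hw' => /andP [/allP ha _]; move: (ha _ (mem_head _ pi1)) => /= /andP [/andP [? ?] ?].
move: hb => /= /andP [/andP [? ?] ?]; lia.
Qed.
End S.

Lemma wf_of_Pi L (G : rel 'I_L) p (pi : seq (lblock L)) : in_Pi G p pi -> wf p pi.
Proof.
case=> ha hp _; apply/andP; split; last by rewrite (perm_uniq hp) iota_uniq.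
apply/allP => -[[a b] j] ht; have /andP [h1 h2] := memE ht.
move: h1 h2; rewrite -/(E pi) !(perm_mem hp) !mem_iota /= => /andP [? ?] /andP [? ?].
have /= := allP ha _ ht; lia.
Qed.

Theorem lemma3p1 (L : nat) (G : rel 'I_L) (Gsym : symmetric G)
  (Girr : irreflexive G) (p : nat) (hp : 1 <= p) (pi : seq (lblock L))
  (Hpi : in_Pi G p pi) :
  forall (s r : nat) (i : 'I_L), (s, r, i) \in pi ->
    size (wk (Phi p pi) s) = (size (wk (Phi p pi) s.-1)).+1 /\
    size (wk (Phi p pi) r) + 1 = size (wk (Phi p pi) r.-1).
Proof.
move=> s r i hU.
have hw := wf_of_Pi Hpi.
have [hperm hUb hw' hav] := split_wf hw hU.
move: hUb => /= /andP [/andP [hs0 hsr] hr2].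
have I := inv hp hw.
have eO : forall k, O pi k = (s <= k) + O (rem (s, r, i) pi) k by move=> k; rewrite /O (permP hperm).
have eC : forall k, C pi k = (r <= k) + C (rem (s, r, i) pi) k by move=> k; rewrite /C (permP hperm).
have hO : forall k, k != s -> k != r -> O (rem (s, r, i) pi) k = O (rem (s, r, i) pi) k.-1 -> True by [].
have Os : O (rem (s, r, i) pi) s = O (rem (s, r, i) pi) s.-1.
  apply: eq_in_count => t ht; move: (hav t ht) => /= [/eqP ? /eqP ? /eqP ? /eqP ?].
  apply/idP/idP; lia.
have Cs : C (rem (s, r, i) pi) s = C (rem (s, r, i) pi) s.-1.
  apply: eq_in_count => t ht; move: (hav t ht) => /= [/eqP ? /eqP ? /eqP ? /eqP ?].
  apply/idP/idP; lia.
have Or : O (rem (s, r, i) pi) r = O (rem (s, r, i) pi) r.-1.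
  apply: eq_in_count => t ht; move: (hav t ht) => /= [/eqP ? /eqP ? /eqP ? /eqP ?].
  apply/idP/idP; lia.
have Cr : C (rem (s, r, i) pi) r = C (rem (s, r, i) pi) r.-1.
  apply: eq_in_count => t ht; move: (hav t ht) => /= [/eqP ? /eqP ? /eqP ? /eqP ?].
  apply/idP/idP; lia.
have I1 := I s ltac:(lia). have I2 := I s.-1 ltac:(lia).
have I3 := I r ltac:(lia). have I4 := I r.-1 ltac:(lia).
rewrite !eO !eC Os Cs Or Cr in I1 I2 I3 I4.
move: I1 I2 I3 I4.
have -> : (s <= s) = true by rewrite leqnn.
have -> : (r <= s) = false by rewrite leqNgt hsr.
have -> : (s <= s.-1) = false by rewrite leqNgt; apply/idP; lia.
have -> : (r <= s.-1) = false by rewrite leqNgt; apply/idP; lia.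
have -> : (s <= r) = true by apply/idP; lia.
have -> : (r <= r) = true by rewrite leqnn.
have -> : (s <= r.-1) = true by apply/idP; lia.
have -> : (r <= r.-1) = false by rewrite leqNgt; apply/idP; lia.
move=> /= I1 I2 I3 I4; split; lia.
Qed.
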